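(* Let $a\in\mathbb C$ and $n\ge 0$. Then $\{(x-a)^T : T\in\mathbb P_n\}$ is a $\mathbb C$-basis of $\mathbb C\{x\}_{\le n}$. Moreover, for every $f\in\mathbb C\{x\}_{\le n}$ and every $T\in\mathbb P_n$, the coefficient of $(x-a)^T$ in the expansion of $f$ with respect to this basis is $$\langle f,(x-a)^T\rangle=\sum_{U\in\mathbb P_n}\langle f,x^U\rangle\,(U/T)\,a^{\deg(U)-\deg(T)}.$$
   Context: Let $\mathbb P$ denote the set of finite planar reduced rooted trees (rooted trees in which the children of each vertex are linearly ordered and no vertex has exactly one child), including the empty tree $\mathbf 1$ and the one-vertex tree $|$. For $T\in\mathbb P$, $\deg(T)$ is the number of leaves ($\deg\mathbf 1=0$, $\deg|=1$) and $L(T)$ is its set of leaves; $\mathbb P_n=\{T\in\mathbb P:\deg T\le n\}$. The algebra $\mathbb C\{x\}_{\mathbb P}$ of planar polynomials is the $\mathbb C$-vector space with basis $\{x^T:T\in\mathbb P\}$, $x^{\mathbf 1}=1$, $x^{|}=x$, equipped for each $k\ge2$ with the $k$-linear operation $\omega_k$ given on basis elements by $\omega_k(x^{T_1},\dots,x^{T_k})=x^T$, where $T$ is obtained by attaching the nonempty $T_i$ (in this order) as the subtrees of the children of a new root (if exactly one $T_i$ is nonempty, $T$ is that $T_i$; if all are empty, $T=\mathbf 1$). The product is $f\cdot g=\omega_2(f,g)$. Each $x^T$ arises from $x$ by iterating these operations along the tree $T$; for $y\in\mathbb C\{x\}_{\mathbb P}$, $y^T$ denotes the result of the same iteration starting from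 $y$ (with $y^{\mathbf 1}=1$), in particular $(x-a)^T$ for $a\in\mathbb C$. $\mathbb C\{x\}_{\le n}$ is the span of $\{x^T:T\in\mathbb P_n\}$, and $\langle f,x^U\rangle$ is the coefficient of $x^U$ in $f$. For $S\in\mathbb P$ and $I\subseteq L(S)$, the contraction $S|I\in\mathbb P$ is obtained from the subtree of $S$ consisting of all vertices on paths from the root to leaves in $I$ (with induced planar order) by suppressing every vertex having exactly one child; $S|\emptyset=\mathbf 1$ and $S|I=|$ if $\#I=1$. The planar binomial coefficient is $(S/T)=\#\{I\subseteq L(S): S|I=T\}$ (so it is $0$ unless $\deg T\le \deg S$). *)

(* Defs.v *)
From HB Require Import structures.
From mathcomp Require Import all_boot all_algebra.

Set Implicit Arguments.
Unset Strict Implicit.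
Unset Printing Implicit Defensive.
Import GRing.Theory.
Local Open Scope ring_scope.

(** Nonempty planar rooted trees: a vertex is the (ordered) list of its
    children; a leaf is [PNode [::]]. *)
Inductive ptree := PNode of seq ptree.

Fixpoint ptree_enc (t : ptree) : GenTree.tree unit :=
  let: PNode ts := t in GenTree.Node 0 (map ptree_enc ts).
Fixpoint ptree_dec (g : GenTree.tree unit) : ptree :=
  match g with
  | GenTree.Leaf _ => PNode [::]
  | GenTree.Node _ gs => PNode (map ptree_dec gs)
  end.

Lemma ptree_encK : cancel ptree_enc ptree_dec.
Proof.
rewrite /cancel; fix IH 1; case=> ts /=; congr PNode.
elim: ts => //= t ts IHts; by rewrite IH IHts.
Qed.

HB.instance Definition _ := Countable.copy ptree (can_type ptree_encK).

Definition pleaf : ptree := PNode [::].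

(** Elements of P: [None] is the empty tree 1, [Some t] a nonempty tree. *)
Definition ptr := option ptree.

Fixpoint reduced (t : ptree) : bool :=
  let: PNode ts := t in (size ts != 1%N) && all reduced ts.
Definition preduced (T : ptr) : bool :=
  if T is Some t then reduced t else true.

Fixpoint nleaves (t : ptree) : nat :=
  let: PNode ts := t in
  if ts is [::] then 1%N else sumn (map nleaves ts).
Definition pdeg (T : ptr) : nat := if T is Some t then nleaves t else 0%N.

Definition Pn (n : nat) (T : ptr) : bool := preduced T && (pdeg T <= n)%N.

(** grafting: the tree of omega_k on basis elements *)
Definition graft (ts : seq ptr) : ptr :=
  match pmap id ts with
  | [::] => None
  | [:: t] => Some t
  | ts' => Some (PNode ts')
  end.

(** contraction S|I, where I is encoded by a bit sequence indexing the
    leaves of S in left-to-right (planar) order; returns the contracted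
    tree together with the unconsumed bits. *)
Fixpoint restr (t : ptree) (m : bitseq) : ptr * bitseq :=
  let: PNode ts := t in
  if ts is [::] then
    match m with
    | b :: m' => (if b then Some pleaf else None, m')
    | [::] => (None, [::])
    end
  else
    let fix go (us : seq ptree) (m : bitseq) : seq ptr * bitseq :=
      match us with
      | [::] => ([::], m)
      | u :: us' =>
          let: (r, m1) := restr u m in
          let: (rs, m2) := go us' m1 in (r :: rs, m2)
      end in
    let: (rs, m') := go ts m in (graft rs, m').

Definition contract (S : ptr) (m : bitseq) : ptr :=
  if S is Some s then (restr s m).1 else None.

Definition pbinom (S T : ptr) : nat :=
  #|[pred m : (pdeg S).-tuple bool | contract S m == T]|.

(** Planar polynomials, represented as formal finite linear combinations
    of basis elements x^T; equality is equality of coefficient functions. *)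
Section PlanarPoly.
Variable F : comRingType.

Definition ppoly := seq (F * ptr).

Definition pcoef (f : ppoly) (U : ptr) : F := \sum_(p <- f | p.2 == U) p.1.

Definition pscale (c : F) (f : ppoly) : ppoly := [seq (c * p.1, p.2) | p <- f].

Fixpoint combs (fs : seq ppoly) : seq (F * seq ptr) :=
  if fs is f :: fs' then
    [seq (c.1 * d.1, c.2 :: d.2) | c <- f, d <- combs fs']
  else [:: (1, [::])].

(** multilinear extension of omega_k *)
Definition pomega (fs : seq ppoly) : ppoly := [seq (d.1, graft d.2) | d <- combs fs].

Fixpoint tpow (y : ppoly) (t : ptree) : ppoly :=
  let: PNode ts := t in
  if ts is [::] then y else pomega (map (tpow y) ts).
Definition ppow (y : ppoly) (T : ptr) : ppoly :=
  if T is Some t then tpow y t else [:: (1, None)].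

Definition pxa (a : F) : ppoly := [:: (1, Some pleaf); (- a, None)].

Definition in_le (n : nat) (f : ppoly) : Prop :=
  forall U, ~~ Pn n U -> pcoef f U = 0.

Definition lincomb (s : seq ptr) (c : ptr -> F) (y : ppoly) : ppoly :=
  flatten [seq pscale (c T) (ppow y T) | T <- s].

End PlanarPoly.

(* Main.v *)
Require Import Defs.
From HB Require Import structures.
From mathcomp Require Import all_boot all_algebra.
From mathcomp Require Import zify ring.
Set Implicit Arguments.
Unset Strict Implicit.
Unset Printing Implicit Defensive.
Import GRing.Theory.
Local Open Scope ring_scope.

Lemma ptree_ind' (P : ptree -> Prop) :
  (forall ts, (forall t, t \in ts -> P t) -> P (PNode ts)) -> forall t, P t.
Proof.
move=> H; fix IH 1; case=> ts.
refine (H ts ((fix IHl (us : seq ptree) : forall t, t \in us -> P t :=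
  match us with
  | [::] => fun t Ht => _
  | u :: us' => fun t Ht => _
  end) ts)).
  rewrite in_nil in Ht; exfalso; by move: Ht.
move: Ht; rewrite inE => /orP[/eqP->|]; [exact: IH | exact: IHl].
Qed.

Fixpoint restrs (ts : seq ptree) (m : bitseq) : seq ptr * bitseq :=
  match ts with
  | [::] => ([::], m)
  | u :: us' =>
      let: (r, m1) := restr u m in
      let: (rs, m2) := restrs us' m1 in (r :: rs, m2)
  end.

Lemma restr_node ts m : ts != [::] ->
  restr (PNode ts) m = let: (rs, m') := restrs ts m in (graft rs, m').
Proof. by case: ts. Qed.

Definition cw t m := (restr t m).1.
Definition crs ts m := (restrs ts m).1.

Lemma nleaves_node ts : ts != [::] -> nleaves (PNode ts) = sumn (map nleaves ts).
Proof. by case: ts. Qed.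

Lemma nleaves_gt0 t : (0 < nleaves t)%N.
Proof.
elim/ptree_ind': t => [[|u us]] // IH.
by rewrite nleaves_node //= (leq_trans (IH u _)) ?leq_addr // mem_head.
Qed.

Lemma restr_cat t m1 m2 : size m1 = nleaves t ->
  restr t (m1 ++ m2) = (cw t m1, m2).
Proof.
rewrite /cw; elim/ptree_ind': t m1 m2 => ts IH m1 m2.
case: (altP (ts =P [::])) => [->|nts].
  by case: m1 => [|b [|]] //= _; case: b.
rewrite nleaves_node // !restr_node //.
have: forall m1 m2, size m1 = sumn (map nleaves ts) ->
   restrs ts (m1 ++ m2) = ((restrs ts m1).1, m2).
  elim: ts {nts} IH => [|u us IHus] IH {}m1 {}m2 /=.
    by case: m1.
  move=> sz.
  rewrite -(cat_take_drop (nleaves u) m1) -catA.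
  have szt : size (take (nleaves u) m1) = nleaves u by rewrite size_takel // sz leq_addr.
  rewrite IH ?mem_head //.
  rewrite [in RHS]IH ?mem_head //.
  rewrite IHus ?cats0 ?size_drop ?sz ?addKn //.
  - by case: (restrs us (drop _ m1)).
  - by move=> t tin; apply: IH; rewrite inE tin orbT.
move=> H sz; rewrite H //.
by rewrite -[m1 in RHS]cats0 H //; case: (restrs ts m1).
Qed.

Lemma crs_cons u us m1 m2 : size m1 = nleaves u ->
  crs (u :: us) (m1 ++ m2) = cw u m1 :: crs us m2.
Proof. by move=> sz; rewrite /crs /= restr_cat //; case: restrs. Qed.

Lemma cw_node ts m : ts != [::] -> cw (PNode ts) m = graft (crs ts m).
Proof. by move=> nts; rewrite /cw /crs restr_node //; case: (restrs ts m). Qed.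

Lemma cw_leaf b : cw pleaf [:: b] = if b then Some pleaf else None.
Proof. by []. Qed.

Fixpoint bits k : seq bitseq :=
  if k is k'.+1 then [seq true :: m | m <- bits k'] ++ [seq false :: m | m <- bits k']
  else [:: [::]].

Lemma cons_injb (b : bool) : injective (cons b).
Proof. by move=> x y []. Qed.

Lemma mem_bits k m : (m \in bits k) = (size m == k).
Proof.
elim: k m => [|k IH] [|b m] //=; rewrite mem_cat.
- by apply/negP => /orP [] /mapP [].
- rewrite eqSS; case: b.
    have -> : (true :: m \in [seq false :: m0 | m0 <- bits k]) = false by apply/mapP => -[].
    by rewrite orbF (mem_map (@cons_injb true)) IH.
  have -> : (false :: m \in [seq true :: m0 | m0 <- bits k]) = false by apply/mapP => -[].
  by rewrite (mem_map (@cons_injb false)) IH.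
Qed.

Lemma uniq_bits k : uniq (bits k).
Proof.
elim: k => //= k IH; rewrite cat_uniq !map_inj_uniq ?IH //; try exact: cons_injb.
rewrite andbT; apply/hasP => -[x /mapP [y _ ->] /mapP [z _]] //.
Qed.

Lemma size_bits k m : m \in bits k -> size m = k.
Proof. by rewrite mem_bits => /eqP. Qed.

Lemma bits_add k1 k2 : bits (k1 + k2) = [seq m1 ++ m2 | m1 <- bits k1, m2 <- bits k2].
Proof.
elim: k1 => [|k1 IH] /=.
  by rewrite add0n cats0 map_id.
rewrite (allpairs_cat _ _ _ (fun _ => bits k2)) !(allpairs_mapl _ _ _ (fun _ => bits k2)) IH.
by rewrite !(map_allpairs _ _ _ (fun _ => bits k2)).
Qed.

Definition wt (F : fieldType) (a : F) (m : bitseq) : F := (- a) ^+ count negb m.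

Lemma wt_cat (F : fieldType) (a : F) m1 m2 : wt a (m1 ++ m2) = wt a m1 * wt a m2.
Proof. by rewrite /wt count_cat exprD. Qed.

Lemma tpow_exp (F : fieldType) (a : F) t :
  tpow (pxa a) t = [seq (wt a m, cw t m) | m <- bits (nleaves t)].
Proof.
elim/ptree_ind': t => ts IH.
case: (altP (ts =P [::])) => [->|nts]; first by [].
have: combs [seq tpow (pxa a) i | i <- ts] =
   [seq (wt a m, crs ts m) | m <- bits (sumn (map nleaves ts))].
  elim: ts {nts} IH => [|u us IHus] IH //=.
  rewrite IH ?mem_head // IHus; last by move=> t tin; apply: IH; rewrite inE tin orbT.
  rewrite bits_add (map_allpairs _ _ _ (fun _ => bits _)).
  rewrite (allpairs_mapl _ _ _ (fun _ => _)) (allpairs_mapr _ _ _ (fun _ => _)) /=.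
  apply/eq_in_allpairs => m1 m2 /size_bits s1 /size_bits s2 /=.
  by rewrite wt_cat crs_cons.
move=> H.
rewrite nleaves_node //.
case: ts nts IH H => // u us _ IH H.
rewrite /= -/(tpow (pxa a) u) -/(map (tpow (pxa a)) us).
rewrite /pomega; move: H => /= ->; rewrite -map_comp.
by apply: eq_map => m /=; rewrite cw_node.
Qed.

Lemma ppow_exp (F : fieldType) (a : F) T :
  ppow (pxa a) T = [seq (wt a m, contract T m) | m <- bits (pdeg T)].
Proof. by case: T => [t|] //=; rewrite tpow_exp. Qed.

Lemma pcoef_map (F : fieldType) (I : Type) (g : I -> F) (h : I -> ptr) l U :
  pcoef [seq (g m, h m) | m <- l] U = \sum_(m <- l | h m == U) g m.
Proof. by rewrite /pcoef big_map. Qed.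

Lemma pcoef_ppow (F : fieldType) (a : F) T U :
  pcoef (ppow (pxa a) T) U = \sum_(m <- bits (pdeg T) | contract T m == U) wt a m.
Proof. by rewrite ppow_exp pcoef_map. Qed.

Lemma pcoef_pscale (F : fieldType) (c : F) f U : pcoef (pscale c f) U = c * pcoef f U.
Proof. by rewrite /pcoef /pscale big_map mulr_sumr. Qed.

Lemma pcoef_lincomb (F : fieldType) s c (y : ppoly F) U :
  pcoef (lincomb s c y) U = \sum_(T <- s) c T * pcoef (ppow y T) U.
Proof.
rewrite /lincomb; elim: s => [|T s IH] /=; first by rewrite /pcoef !big_nil.
by rewrite big_cons -IH -pcoef_pscale /pcoef /= big_cat.
Qed.

Lemma pdeg_graft rs : pdeg (graft rs) = sumn (map pdeg rs).
Proof.
have ->: sumn (map pdeg rs) = sumn (map nleaves (pmap id rs)).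
  by elim: rs => [|[r|] rs IH] //=; rewrite IH.
by rewrite /graft; case: (pmap id rs) => [|t [|t' ts]] //=; rewrite addn0.
Qed.

Lemma red_graft rs : all preduced rs -> preduced (graft rs).
Proof.
have: all preduced rs -> all reduced (pmap id rs).
  by elim: rs => [|[r|] rs IH] //=; case/andP => -> /IH ->.
move=> H /H; rewrite /graft; case: (pmap id rs) => [|t [|t' ts]] //=.
  by rewrite andbT.
Qed.

Lemma crs_nil m : crs [::] m = [::].
Proof. by []. Qed.

Lemma crs_consE u us m : crs (u :: us) m = cw u m :: crs us (restr u m).2.
Proof. by rewrite /crs /cw /=; case: (restr u m) => r m1 /=; case: (restrs us m1). Qed.

Lemma crs_split u us m : size m = (nleaves u + sumn (map nleaves us))%N ->
  crs (u :: us) m = cw u (take (nleaves u) m) :: crs us (drop (nleaves u) m).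
Proof.
move=> sz; rewrite -{1}(cat_take_drop (nleaves u) m) crs_cons //.
by rewrite size_takel // sz leq_addr.
Qed.

Lemma deg_cw t m : size m = nleaves t -> pdeg (cw t m) = count id m.
Proof.
elim/ptree_ind': t m => ts IH m.
case: (altP (ts =P [::])) => [->|nts].
  by case: m => [|[] [|]].
rewrite nleaves_node // cw_node // pdeg_graft.
elim: ts {nts} IH m => [|u us IHus] IH m; first by case: m.
move=> sz; rewrite crs_split //= IH ?mem_head ?size_takel ?sz ?leq_addr //.
rewrite IHus ?size_drop ?sz ?addKn //; last by move=> t tin; apply: IH; rewrite inE tin orbT.
by rewrite -count_cat cat_take_drop.
Qed.

Lemma red_cw t m : preduced (cw t m).
Proof.
elim/ptree_ind': t m => ts IH m.
case: (altP (ts =P [::])) => [->|nts].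
  by case: m => [|[] ?].
rewrite cw_node //; apply: red_graft.
elim: ts {nts} IH m => [|u us IHus] IH m //.
rewrite crs_consE /= IH ?mem_head // IHus //.
by move=> t tin; apply: IH; rewrite inE tin orbT.
Qed.

Lemma cw_full t : reduced t -> cw t (nseq (nleaves t) true) = Some t.
Proof.
elim/ptree_ind': t => ts IH.
case: (altP (ts =P [::])) => [->|nts]; first by [].
move=> /andP [s1 rts].
rewrite nleaves_node // cw_node //.
have ->: crs ts (nseq (sumn (map nleaves ts)) true) = map Some ts.
  elim: ts {nts s1} IH rts => [|u us IHus] IH //= /andP [ru rus].
  rewrite nseqD crs_cons ?size_nseq // IH ?mem_head // IHus //.
  by move=> t tin; apply: IH; rewrite inE tin orbT.
have pm: pmap id (map Some ts) = ts by elim: (ts) => //= u us ->.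
rewrite /graft pm; move: s1 nts; by case: ts {IH rts pm} => [|u [|v us]].
Qed.

Lemma deg_contract T m : size m = pdeg T -> pdeg (contract T m) = count id m.
Proof. by case: T => [t|] /=; [exact: deg_cw | case: m]. Qed.

Lemma red_contract T m : preduced (contract T m).
Proof. by case: T => [t|] //=; exact: red_cw. Qed.

Lemma contract_full T : preduced T -> contract T (nseq (pdeg T) true) = T.
Proof. by case: T => [t|] //= /cw_full. Qed.

Lemma deg_crs ts m : size m = sumn (map nleaves ts) ->
  sumn (map pdeg (crs ts m)) = count id m.
Proof.
elim: ts m => [|u us IH] m; first by case: m.
move=> sz; rewrite crs_split //= deg_cw ?size_takel ?sz ?leq_addr //.
by rewrite IH ?size_drop ?sz ?addKn // -count_cat cat_take_drop.
Qed.

Fixpoint sub (m k : bitseq) : bitseq :=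
  match m with
  | [::] => [::]
  | b :: m' => if b then head false k :: sub m' (behead k) else false :: sub m' k
  end.

Lemma size_sub m k : size (sub m k) = size m.
Proof. by elim: m k => [|[] m IH] k //=; rewrite IH. Qed.

Lemma count_sub m k : size k = count id m -> count id (sub m k) = count id k.
Proof.
elim: m k => [|[] m IH] [|x k] //= sz; rewrite IH //.
by case: sz.
Qed.

Lemma sub_cat m1 m2 k :
  sub (m1 ++ m2) k = sub m1 (take (count id m1) k) ++ sub m2 (drop (count id m1) k).
Proof.
elim: m1 k => [|b m1 IH] k /=; first by case: k.
case: b => /=; last by rewrite IH.
case: k => [|x k] /=; rewrite IH //.
Qed.

Fixpoint ccs (rs : seq ptr) (k : bitseq) : seq ptr :=
  if rs is r :: rs' then contract r (take (pdeg r) k) :: ccs rs' (drop (pdeg r) k)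
  else [::].

Lemma pmap_ccs rs k : pmap id (ccs rs k) = pmap id (ccs (map Some (pmap id rs)) k).
Proof.
elim: rs k => [|[r|] rs IH] k //=.
  by rewrite IH.
by rewrite IH; case: k.
Qed.

Lemma ccs_crs ts k : size k = sumn (map nleaves ts) -> ccs (map Some ts) k = crs ts k.
Proof.
elim: ts k => [|u us IH] k; first by case: k.
by move=> sz; rewrite crs_split //= IH // size_drop sz addKn.
Qed.

Lemma pmap_some (ts : seq ptree) : pmap id (map Some ts) = ts.
Proof. by elim: ts => //= u us ->. Qed.

Lemma graft_pm rs : graft rs = graft (map Some (pmap id rs)).
Proof. by rewrite /graft pmap_some. Qed.

Lemma graft1 x : graft [:: x] = x.
Proof. by case: x. Qed.

Lemma graft_contract rs k : size k = sumn (map pdeg rs) ->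
  contract (graft rs) k = graft (ccs rs k).
Proof.
have ->: sumn (map pdeg rs) = sumn (map nleaves (pmap id rs)).
  by elim: rs => [|[r|] rs IH] //=; rewrite IH.
move=> sz; rewrite [RHS]graft_pm pmap_ccs -graft_pm graft_pm.
move: (pmap id rs) sz => [|t [|v us]] sz //.
  rewrite /= addn0 in sz; rewrite /= graft1 take_oversize ?sz //.
rewrite ccs_crs //.
have ->: graft [seq Some i | i <- [:: t, v & us]] = Some (PNode [:: t, v & us]) by rewrite /graft pmap_some.
by rewrite /contract -/(cw _ k) cw_node.
Qed.

Lemma cw_comp t m k : size m = nleaves t -> size k = count id m ->
  contract (cw t m) k = cw t (sub m k).
Proof.
elim/ptree_ind': t m k => ts IH m k.
case: (altP (ts =P [::])) => [->|nts].
  by case: m => [|[] [|]] //; case: k => [|[] [|]].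
rewrite nleaves_node // => szm szk.
rewrite !cw_node // graft_contract ?deg_crs //; congr graft.
revert m k szm szk; elim: ts {nts} IH => [|u us IHus] IH m k szm szk; first by case: m szm szk.
have szt : size (take (nleaves u) m) = nleaves u by rewrite size_takel // szm leq_addr.
have szd : size (drop (nleaves u) m) = sumn (map nleaves us) by rewrite size_drop szm addKn.
have cm : count id m = (count id (take (nleaves u) m) + count id (drop (nleaves u) m))%N.
  by rewrite -count_cat cat_take_drop.
rewrite crs_split // /= deg_cw //.
rewrite -[m in sub m k](cat_take_drop (nleaves u) m) sub_cat crs_cons ?size_sub //.
rewrite IH ?mem_head // ?size_takel ?szk ?cm ?leq_addr //.
rewrite IHus // ?size_drop ?szk ?cm ?addKn //.
by move=> t tin; apply: IH; rewrite inE tin orbT.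
Qed.

Lemma contract_comp T m k : size m = pdeg T -> size k = count id m ->
  contract (contract T m) k = contract T (sub m k).
Proof. by case: T => [t|] /=; [exact: cw_comp | case: m => // _; case: k]. Qed.

Lemma le_count J m : all2 implb J m -> (count id J <= count id m)%N.
Proof.
elim: J m => [|b J IH] [|c m] //= /andP [bc /IH le].
by case: b c bc => [] [] //= _; rewrite ?ltnS // ltnW.
Qed.

Lemma bitsS N : bits N.+1 = [seq true :: m | m <- bits N] ++ [seq false :: m | m <- bits N].
Proof. by []. Qed.

Lemma reindex (F : fieldType) N (G : bitseq -> bitseq -> F) :
  \sum_(m <- bits N) \sum_(k <- bits (count id m)) G m (sub m k) =
  \sum_(J <- bits N) \sum_(m <- bits N | all2 implb J m) G m J.
Proof.
elim: N G => [|N IH] G.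
  by rewrite /= !big_cons !big_nil /= !addr0.
rewrite bitsS !big_cat !big_map /=.
under eq_bigr => m _ do rewrite add0n big_cat !big_map /=.
under [X in _ + X = _]eq_bigr => m _ do rewrite add0n.
under [X in _ = X + _]eq_bigr => J _ do rewrite big_cat !big_map /= big_pred0_eq addr0.
under [X in _ = _ + X]eq_bigr => J _ do rewrite big_cat !big_map /=.
rewrite big_split /= [X in _ = _ + X]big_split /=.
rewrite (IH (fun m J => G (true :: m) (true :: J))).
rewrite (IH (fun m J => G (true :: m) (false :: J))).
by rewrite (IH (fun m J => G (false :: m) (false :: J))) addrA.
Qed.

Lemma altsum (F : fieldType) N J : size J = N ->
  \sum_(m <- bits N | all2 implb J m) (-1 : F) ^+ (count id m - count id J) =
  (J == nseq N true)%:R.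
Proof.
elim: N J => [|N IH] [|b J] //=.
  by rewrite big_cons big_nil addr0.
move=> [sz]; rewrite big_cat !big_map /=.
case: b => /=.
  rewrite big_pred0_eq addr0 -IH //.
have -> : \sum_(j <- bits N | all2 implb J j) (-1 : F) ^+ (1 + count id j - (0 + count id J)) =
  - \sum_(j <- bits N | all2 implb J j) (-1 : F) ^+ (count id j - count id J).
  rewrite -sumrN; apply: eq_bigr => m le.
  by rewrite add1n add0n subSn ?le_count // exprS mulN1r.
by under eq_bigr do rewrite !add0n; rewrite addNr.
Qed.

Lemma perm_bits k : perm_eq (map val (index_enum {: k.-tuple bool})) (bits k).
Proof.
apply: uniq_perm.
- by rewrite map_inj_uniq ?index_enum_uniq //; exact: val_inj.
- exact: uniq_bits.
move=> m; rewrite mem_bits; apply/mapP/idP => [[t _ ->]|/eqP sz].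
  by rewrite size_tuple.
have H : size m == k by rewrite sz.
by exists (Tuple H); rewrite ?mem_index_enum.
Qed.

Lemma pbinom_sum S T : pbinom S T = (\sum_(m <- bits (pdeg S) | contract S m == T) 1)%N.
Proof.
rewrite /pbinom -sum1_card -(perm_big _ (perm_bits _)) big_map.
by rewrite [in RHS]big_mkcond [in LHS]big_mkcond.
Qed.

Lemma sum_pick (F : fieldType) (s : seq ptr) x (H : ptr -> F) :
  uniq s -> x \in s -> \sum_(T <- s) (if x == T then H T else 0) = H x.
Proof.
move=> us xs; rewrite (bigD1_seq x) //= eqxx big1 ?addr0 // => T /negPf.
by rewrite eq_sym => ->.
Qed.

Lemma comp_sum (F : fieldType) (n : nat) (s : seq ptr) U W (G : nat -> nat -> nat -> F) :
  uniq s -> (forall T, (T \in s) = Pn n T) -> Pn n U ->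
  \sum_(T <- s) \sum_(m <- bits (pdeg U) | contract U m == T)
     \sum_(k <- bits (pdeg T) | contract T k == W) G (count id m) (pdeg T) (count id k)
  = \sum_(J <- bits (pdeg U) | contract U J == W)
      \sum_(m <- bits (pdeg U) | all2 implb J m) G (count id m) (count id m) (count id J).
Proof.
move=> us sP PU.
under eq_bigr => T _ do rewrite big_mkcond.
rewrite exchange_big /=.
rewrite (eq_big_seq (fun m => \sum_(k <- bits (count id m))
   (if contract U (sub m k) == W then G (count id m) (count id m) (count id (sub m k)) else 0))); last first.
  move=> m /size_bits szm.
  rewrite (sum_pick (fun T => \sum_(k <- bits (pdeg T) | contract T k == W)
       G (count id m) (pdeg T) (count id k))) //; last first.
    rewrite sP /Pn red_contract deg_contract //=.
    move: PU => /andP [_]; apply: leq_trans; rewrite -szm; exact: count_size.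
  rewrite deg_contract // big_mkcond; apply: eq_big_seq => k /size_bits szk.
  by rewrite contract_comp ?count_sub.
rewrite (reindex _ (fun m J => if contract U J == W then G (count id m) (count id m) (count id J) else 0)).
rewrite [RHS]big_mkcond; apply: eq_bigr => J _.
by case: (contract U J == W); rewrite // big1.
Qed.

Lemma count_negb k : count negb k = (size k - count id k)%N.
Proof. by rewrite -(count_predC id k) addKn. Qed.

Lemma wtE (F : fieldType) (a : F) d k : size k = d -> wt a k = (- a) ^+ (d - count id k).
Proof. by move=> <-; rewrite /wt count_negb. Qed.

Lemma B_sum (F : fieldType) (a : F) V T :
  (pbinom V T)%:R * a ^+ (pdeg V - pdeg T) =
  \sum_(m <- bits (pdeg V) | contract V m == T) a ^+ (pdeg V - count id m).
Proof.
rewrite pbinom_sum natr_sum mulr_suml big_seq_cond [RHS]big_seq_cond.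
apply: eq_bigr => m /andP [/size_bits sz /eqP <-].
by rewrite mul1r deg_contract.
Qed.

Lemma sgn2 (F : fieldType) y : (-1 : F) ^+ (y + y) = 1.
Proof. by elim: y => // y IH; rewrite addSn addnS !exprS mulrA mulrNN !mul1r IH. Qed.

Lemma finish (F : fieldType) V U (h : nat -> F) : preduced V ->
  \sum_(J <- bits (pdeg V) | contract V J == U) h (count id J) * (J == nseq (pdeg V) true)%:R
  = (V == U)%:R * h (pdeg V).
Proof.
move=> rV; rewrite big_mkcond (bigD1_seq (nseq (pdeg V) true)) ?uniq_bits ?mem_bits ?size_nseq //=.
rewrite big1 ?addr0; last by move=> J /negPf ->; rewrite mulr0 if_same.
rewrite contract_full // eqxx mulr1 count_nseq /= mul1n.
by case: (V == U); rewrite ?mul1r ?mul0r.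
Qed.

Lemma ident1 (F : fieldType) (a : F) n s V U :
  uniq s -> (forall T, (T \in s) = Pn n T) -> V \in s ->
  \sum_(T <- s) (pbinom V T)%:R * a ^+ (pdeg V - pdeg T) * pcoef (ppow (pxa a) T) U
  = (V == U)%:R.
Proof.
move=> us sP Vs.
have PV : Pn n V by rewrite -sP.
transitivity (\sum_(T <- s) \sum_(m <- bits (pdeg V) | contract V m == T)
   \sum_(k <- bits (pdeg T) | contract T k == U)
     (fun p d q => a ^+ (pdeg V - p) * (- a) ^+ (d - q)) (count id m) (pdeg T) (count id k)).
  apply: eq_bigr => T _; rewrite B_sum pcoef_ppow mulr_suml; apply: eq_bigr => m _.
  rewrite mulr_sumr big_seq_cond [RHS]big_seq_cond; apply: eq_bigr => k /andP [/size_bits szk _].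
  by rewrite (wtE _ szk).
rewrite (@comp_sum F n s V U (fun p d q => a ^+ (pdeg V - p) * (- a) ^+ (d - q)) us sP PV) /=.
transitivity (\sum_(J <- bits (pdeg V) | contract V J == U)
   (fun c => a ^+ (pdeg V - c)) (count id J) * (J == nseq (pdeg V) true)%:R); last first.
  rewrite (@finish F V U (fun c => a ^+ (pdeg V - c))) ?subnn ?expr0 ?mulr1 //; by case/andP: PV.
rewrite big_seq_cond [RHS]big_seq_cond; apply: eq_bigr => J /andP [/size_bits szJ _].
rewrite -altsum // mulr_sumr big_seq_cond [RHS]big_seq_cond; apply: eq_bigr => m /andP [/size_bits szm le].
have h1 := le_count le.
have h2 : (count id m <= pdeg V)%N by rewrite -szm count_size.
rewrite exprNn mulrCA -exprD mulrC.
have -> : (pdeg V - count id m + (count id m - count id J) = pdeg V - count id J)%N by lia.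
by [].
Qed.

Lemma ident2 (F : fieldType) (a : F) n s T T0 :
  uniq s -> (forall T, (T \in s) = Pn n T) -> T \in s ->
  \sum_(W <- s) pcoef (ppow (pxa a) T) W * ((pbinom W T0)%:R * a ^+ (pdeg W - pdeg T0))
  = (T == T0)%:R.
Proof.
move=> us sP Ts.
have PT : Pn n T by rewrite -sP.
have rT : preduced T by case/andP: PT.
transitivity (\sum_(W <- s) \sum_(m <- bits (pdeg T) | contract T m == W)
   \sum_(k <- bits (pdeg W) | contract W k == T0)
     (fun p d q => (- a) ^+ (pdeg T - p) * a ^+ (d - q)) (count id m) (pdeg W) (count id k)).
  apply: eq_bigr => W _; rewrite B_sum pcoef_ppow mulr_suml.
  rewrite big_seq_cond [RHS]big_seq_cond; apply: eq_bigr => m /andP [/size_bits szm _].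
  by rewrite (wtE _ szm) mulr_sumr.
rewrite (@comp_sum F n s T T0 (fun p d q => (- a) ^+ (pdeg T - p) * a ^+ (d - q)) us sP PT) /=.
transitivity (\sum_(J <- bits (pdeg T) | contract T J == T0)
   (fun c => a ^+ (pdeg T - c) * (-1) ^+ (pdeg T - c)) (count id J) * (J == nseq (pdeg T) true)%:R); last first.
  by rewrite (@finish F T T0 (fun c => a ^+ (pdeg T - c) * (-1) ^+ (pdeg T - c))) ?subnn ?expr0 ?mulr1.
rewrite big_seq_cond [RHS]big_seq_cond; apply: eq_bigr => J /andP [/size_bits szJ _].
rewrite -altsum // mulr_sumr big_seq_cond [RHS]big_seq_cond; apply: eq_bigr => m /andP [/size_bits szm le].
have h1 := le_count le.
have h2 : (count id m <= pdeg T)%N by rewrite -szm count_size.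
have -> : (pdeg T - count id J = (pdeg T - count id m) + (count id m - count id J))%N by lia.
have YY : (-1 : F) ^+ (count id m - count id J) * (-1) ^+ (count id m - count id J) = 1.
  by rewrite -exprD sgn2.
rewrite (exprNn a) !exprD.
set X := (-1 : F) ^+ (pdeg T - count id m) in YY *.
set Y := (-1 : F) ^+ (count id m - count id J) in YY *.
transitivity (X * a ^+ (pdeg T - count id m) * a ^+ (count id m - count id J) * (Y * Y)).
  by rewrite YY mulr1.
ring.
Qed.

Fixpoint lists (b : nat) (s : seq ptree) : seq (seq ptree) :=
  if b is b'.+1 then [::] :: [seq x :: l | x <- s, l <- lists b' s] else [:: [::]].

Lemma mem_lists b s l : (size l <= b)%N -> all (fun x => x \in s) l -> l \in lists b s.
Proof.
elim: b l => [|b IH] [|x l] //=.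
move=> sz /andP [xs ls]; rewrite inE; apply/orP; right.
by apply: allpairs_f => //; apply: IH.
Qed.

Fixpoint gen k : seq ptree :=
  if k is k'.+1 then pleaf :: [seq PNode l | l <- lists k (gen k')] else [::].

Lemma le_sumn (f : ptree -> nat) ts c : c \in ts -> (f c <= sumn (map f ts))%N.
Proof.
elim: ts => [|u us IH] //; rewrite inE => /orP [/eqP ->|/IH le] /=; first exact: leq_addr.
by rewrite (leq_trans le) // leq_addl.
Qed.

Lemma lt_sumn ts c : c \in ts -> (2 <= size ts)%N -> (nleaves c < sumn (map nleaves ts))%N.
Proof.
case: ts => [|u [|v us]] //= cin _.
move: cin; rewrite inE => /orP [/eqP ->|cin].
  by rewrite -{1}(addn0 (nleaves u)) ltn_add2l addn_gt0 nleaves_gt0.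
apply: (@leq_trans (nleaves u + nleaves c)); first by rewrite -add1n leq_add2r nleaves_gt0.
by rewrite leq_add2l (le_sumn nleaves cin).
Qed.

Lemma size_le_sumn ts : (size ts <= sumn (map nleaves ts))%N.
Proof. by elim: ts => //= u us IH; rewrite -add1n leq_add ?nleaves_gt0. Qed.

Lemma mem_gen k t : reduced t -> (nleaves t <= k)%N -> t \in gen k.
Proof.
elim: k t => [|k IH] t rt le.
  by move: (nleaves_gt0 t); rewrite lt0n; move: le; rewrite leqn0 => ->.
case: t rt le => ts; case: (altP (ts =P [::])) => [-> //|nts].
move=> /andP [s1 rts]; rewrite nleaves_node // => le.
have s2 : (2 <= size ts)%N by case: ts nts s1 {rts le} => [|u [|v us]].
rewrite inE; apply/orP; right; apply: map_f; apply: mem_lists.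
  exact: leq_trans (size_le_sumn ts) le.
apply/allP => c cin; apply: IH; first by move/allP: rts; apply.
by rewrite -ltnS (leq_trans (lt_sumn cin s2)).
Qed.

Lemma enum_Pn n : exists s : seq ptr, uniq s /\ forall T, (T \in s) = Pn n T.
Proof.
exists (undup [seq T <- None :: map Some (gen n) | Pn n T]); split; first exact: undup_uniq.
move=> T; rewrite mem_undup mem_filter; apply/andP/idP => [[] //|PT]; split => //.
case: T PT => [t|] /andP [rt le]; last exact: mem_head.
by rewrite inE (mem_map (@Some_inj _)) mem_gen.
Qed.

Unset Implicit Arguments.
Set Strict Implicit.

Theorem proposition2p1 (F : fieldType) (a : F) (n : nat) :
  (exists s : seq ptr, uniq s /\ forall T, (T \in s) = Pn n T) /\
  forall s : seq ptr, uniq s -> (forall T, (T \in s) = Pn n T) ->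
  [/\ (* each (x-a)^T, T in P_n, lies in C{x}_{<= n} *)
      forall T, T \in s -> in_le n (ppow (pxa a) T),
      (* linear independence *)
      forall c : ptr -> F,
        (forall U, pcoef (lincomb s c (pxa a)) U = 0) ->
        forall T, T \in s -> c T = 0
    & (* spanning, with the explicit coefficients *)
      forall f : ppoly F, in_le n f ->
        forall U, pcoef f U =
          pcoef (lincomb s
                   (fun T => \sum_(V <- s)
                       pcoef f V * (pbinom V T)%:R * a ^+ (pdeg V - pdeg T))
                   (pxa a)) U].
Proof.
split; first exact: enum_Pn.
move=> s us sP; split.
- move=> T Ts U nPU; rewrite pcoef_ppow big_seq_cond big1 // => m /andP [/size_bits szm /eqP cTm].
  move: nPU; rewrite -cTm /Pn red_contract deg_contract //=.
  have : Pn n T by rewrite -sP.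
  by case/andP => _ le; rewrite (leq_trans _ le) // -szm count_size.
- move=> c H T0 T0s.
  have E : \sum_(T <- s) c T * (T == T0)%:R = c T0.
    rewrite (bigD1_seq T0) //= eqxx mulr1 big1 ?addr0 // => T /negPf ->.
    by rewrite mulr0.
  rewrite -E big_seq.
  under eq_bigr => T Ts do rewrite -(ident2 a T0 us sP Ts) mulr_sumr.
  rewrite -big_seq exchange_big /= big1 // => W _.
  transitivity (pcoef (lincomb s c (pxa a)) W * ((pbinom W T0)%:R * a ^+ (pdeg W - pdeg T0))); last by rewrite H mul0r.
  by rewrite pcoef_lincomb mulr_suml; apply: eq_bigr => T _; rewrite mulrA.
- move=> f fin U.
  symmetry; rewrite pcoef_lincomb.
  transitivity (\sum_(T <- s) \sum_(V <- s) pcoef f V * ((pbinom V T)%:R * a ^+ (pdeg V - pdeg T) * pcoef (ppow (pxa a) T) U)).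
    by apply: eq_bigr => T _; rewrite mulr_suml; apply: eq_bigr => V _; rewrite !mulrA.
  rewrite exchange_big /= big_seq.
  under eq_bigr => V Vs do rewrite -mulr_sumr (ident1 a U us sP Vs).
  rewrite -big_seq.
  case: (boolP (U \in s)) => Us.
    rewrite (bigD1_seq U) //= eqxx mulr1 big1 ?addr0 // => V /negPf ->.
    by rewrite mulr0.
  rewrite fin; last by rewrite -sP.
  rewrite big_seq big1 // => V Vs; rewrite (_ : (V == U) = false) ?mulr0 //.
  by apply/eqP => VU; move: Us; rewrite -VU Vs.
Qed.
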